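(* Let $\mathcal{CS}$ be an axiomatically appropriate constant specification and $y$ an individual variable. For every finite set $X$ of individual variables with $y\notin X$, every formula $\varphi(y)$ and every justification term $t$, there are justification terms $f(t)$ and $s(t)$ such that (1) $\vdash_{\mathcal{CS}} t{:}_X\forall y\varphi(y)\to\forall y\, f(t){:}_{Xy}\varphi(y)$, and (2) $\vdash_{\mathcal{CS}} \exists y\, t{:}_{Xy}\varphi(y)\to s(t){:}_X\exists y\varphi(y)$.
   Context: Syntax of FOLPb: terms $t::=p_i\mid c\mid (t\cdot t)\mid (t+t)\mid !t\mid\mathsf b(t)\mid\mathsf{gen}_x(t)$; formulas $Px_1\dots x_n\mid\bot\mid\varphi\to\varphi\mid\forall x\varphi\mid t{:}_X\varphi$ with $X$ a finite set of individual variables; the free variables of $t{:}_X\psi$ are exactly those in $X$. $Xy$ denotes $X\cup\{y\}$ with $y\notin X$. Axioms of $\mathsf{FOLPb}_0$: A1 classical first-order axioms; A2 $t{:}_{Xy}\varphi\to t{:}_X\varphi$ if $y$ not free in $\varphi$; A3 $t{:}_X\varphi\to t{:}_{Xy}\varphi$; B1 $t{:}_X\varphi\to\varphi$; B2 $t{:}_X(\varphi\to\psi)\to(s{:}_X\varphi\to[t\cdot s]{:}_X\psi)$; B3 $t{:}_X\varphi\to[t+s]{:}_X\varphi$, $s{:}_X\varphi\to[t+s]{:}_X\varphi$; B4 $t{:}_X\varphi\to!t{:}_Xt{:}_X\varphi$; B5 $t{:}_X\varphi\to\mathsf{gen}_x(t){:}_X\forall x\varphi$ if $x\notin X$; Bb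 $\forall y\,t{:}_{Xy}\varphi(y)\to\mathsf b(t){:}_X\forall y\varphi(y)$; rules modus ponens and generalization. A constant specification $\mathcal{CS}$ is a set of formulas $c{:}\psi$ ($\psi$ an axiom, $c$ a constant); it is axiomatically appropriate if for every axiom $\psi$ some $c{:}\psi\in\mathcal{CS}$. $\vdash_{\mathcal{CS}}$ is provability in $\mathsf{FOLPb}_0$ with $\mathcal{CS}$ added as axioms. *)

(* Defs.v *)
From mathcomp Require Import all_boot.
Set Implicit Arguments.
Unset Strict Implicit.
Unset Printing Implicit Defensive.

(* Individual variables and predicate symbols are natural numbers. *)

Inductive jterm : Type :=
  | JVar   : nat -> jterm
  | JConst : nat -> jterm
  | JApp   : jterm -> jterm -> jterm
  | JSum   : jterm -> jterm -> jterm
  | JBang  : jterm -> jterm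
  | JB     : jterm -> jterm
  | JGen   : nat -> jterm -> jterm.

(* Finite sets of individual variables, represented canonically as strictly
   increasing lists (so that set equality is Leibniz equality). *)
Record vset := VSet { vs :> seq nat; vs_sorted : sorted ltn vs }.

Definition vnorm (s : seq nat) : seq nat := sort leq (undup s).

Lemma vnorm_sorted (s : seq nat) : sorted ltn (vnorm s).
Proof.
rewrite ltn_sorted_uniq_leq sort_uniq undup_uniq /=.
apply: sort_sorted; exact: leq_total.
Qed.

Definition mkvset (s : seq nat) : vset := VSet (vnorm_sorted s).
Definition vempty : vset := mkvset [::].
(* X y  :=  X \cup {y} *)
Definition vadd (X : vset) (y : nat) : vset := mkvset (y :: vs X).
Definition vdel (X : vset) (x : nat) : vset := mkvset (filter (predC1 x) (vs X)).

Inductive formula : Type :=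
  | Atom : nat -> seq nat -> formula
  | Bot  : formula
  | Imp  : formula -> formula -> formula
  | All  : nat -> formula -> formula
  | Just : jterm -> vset -> formula -> formula.

Definition Neg (A : formula) : formula := Imp A Bot.
Definition Ex (x : nat) (A : formula) : formula := Neg (All x (Neg A)).

Fixpoint free (x : nat) (A : formula) : bool :=
  match A with
  | Atom _ xs => x \in xs
  | Bot => false
  | Imp A B => free x A || free x B
  | All w A => (w != x) && free x A
  | Just _ X _ => x \in vs X
  end.

Fixpoint subst (x z : nat) (A : formula) : formula :=
  match A with
  | Atom P xs => Atom P (map (fun v => if v == x then z else v) xs)
  | Bot => Bot
  | Imp A B => Imp (subst x z A) (subst x z B)
  | All w A => if w == x then All w A else All w (subst x z A)
  | Just t X A =>
      if x \in vs X then Just t (vadd (vdel X x) z) (subst x z A)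
      else Just t X A
  end.

Fixpoint free_for (x z : nat) (A : formula) : bool :=
  match A with
  | Atom _ _ => true
  | Bot => true
  | Imp A B => free_for x z A && free_for x z B
  | All w A => ~~ free x (All w A) || ((w != z) && free_for x z A)
  | Just _ X A => (x \notin vs X) || free_for x z A
  end.

Inductive IsAxiom : formula -> Prop :=
  | AxK  A B   : IsAxiom (Imp A (Imp B A))
  | AxS  A B C : IsAxiom (Imp (Imp A (Imp B C)) (Imp (Imp A B) (Imp A C)))
  | AxDN A     : IsAxiom (Imp (Neg (Neg A)) A)
  | AxInst x z A : free_for x z A -> IsAxiom (Imp (All x A) (subst x z A))
  | AxVac x A : ~~ free x A -> IsAxiom (Imp A (All x A))
  | AxAllImp x A B : IsAxiom (Imp (All x (Imp A B)) (Imp (All x A) (All x B)))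
  | AxA2 t X y A : y \notin vs X -> ~~ free y A ->
      IsAxiom (Imp (Just t (vadd X y) A) (Just t X A))
  | AxA3 t X y A : y \notin vs X ->
      IsAxiom (Imp (Just t X A) (Just t (vadd X y) A))
  | AxB1 t X A : IsAxiom (Imp (Just t X A) A)
  | AxB2 t s X A B :
      IsAxiom (Imp (Just t X (Imp A B)) (Imp (Just s X A) (Just (JApp t s) X B)))
  | AxB3l t s X A : IsAxiom (Imp (Just t X A) (Just (JSum t s) X A))
  | AxB3r t s X A : IsAxiom (Imp (Just s X A) (Just (JSum t s) X A))
  | AxB4 t X A : IsAxiom (Imp (Just t X A) (Just (JBang t) X (Just t X A)))
  | AxB5 t X x A : x \notin vs X ->
      IsAxiom (Imp (Just t X A) (Just (JGen x t) X (All x A)))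
  | AxBb t X y A : y \notin vs X ->
      IsAxiom (Imp (All y (Just t (vadd X y) A)) (Just (JB t) X (All y A))).

(* A constant specification: a set of pairs (c, psi), read as formulas c:psi
   (with empty variable set), where psi is an axiom. *)
Definition constspec := nat -> formula -> Prop.

Definition is_constspec (CS : constspec) : Prop :=
  forall c A, CS c A -> IsAxiom A.

Definition axiomatically_appropriate (CS : constspec) : Prop :=
  forall A, IsAxiom A -> exists c, CS c A.

Inductive provable (CS : constspec) : formula -> Prop :=
  | PAx A : IsAxiom A -> provable CS A
  | PCS c A : CS c A -> provable CS (Just (JConst c) vempty A)
  | PMP A B : provable CS (Imp A B) -> provable CS A -> provable CS B
  | PGen x A : provable CS A -> provable CS (All x A).

(* Main.v *)
Require Import Defs.
From mathcomp Require Import all_boot.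
Set Implicit Arguments.

Section S.
Variable CS : constspec.

Lemma syl A B C : provable CS (Imp A B) -> provable CS (Imp B C) -> provable CS (Imp A C).
Proof.
move=> hab hbc.
have h1 : provable CS (Imp A (Imp B C)) by apply: PMP (PAx CS (AxK _ _)) hbc.
exact: PMP (PMP (PAx CS (AxS _ _ _)) h1) hab.
Qed.

Lemma smp P Q R : provable CS (Imp P (Imp Q R)) -> provable CS (Imp P Q) -> provable CS (Imp P R).
Proof. move=> h1 h2; exact: PMP (PMP (PAx CS (AxS _ _ _)) h1) h2. Qed.

Lemma contra A B C : provable CS (Imp A B) -> provable CS (Imp (Imp B C) (Imp A C)).
Proof.
move=> hab.
have h1 : provable CS (Imp (Imp B C) (Imp (Imp A B) (Imp A C))).
  exact: syl (PAx CS (AxK _ _)) (PAx CS (AxS _ _ _)).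
apply: smp h1 _; exact: PMP (PAx CS (AxK _ _)) hab.
Qed.

Lemma perm P Q R : provable CS (Imp P (Imp Q R)) -> provable CS (Imp Q (Imp P R)).
Proof.
move=> h. have h1 := PMP (PAx CS (AxS _ _ _)) h.
exact: syl (PAx CS (AxK _ _)) h1.
Qed.

Lemma vs_inj (X1 X2 : vset) : vs X1 = vs X2 -> X1 = X2.
Proof.
case: X1 X2 => s1 p1 [s2 p2] /= e; subst s2; congr VSet; exact: bool_irrelevance.
Qed.

Lemma mem_vnorm s x : (x \in vnorm s) = (x \in s).
Proof. by rewrite /vnorm mem_sort mem_undup. Qed.

Lemma vnorm_id (X : vset) : vnorm X = X.
Proof.
apply: (irr_sorted_eq (leT := ltn)) => //; [exact: ltn_trans|exact: ltnn|exact: vnorm_sorted|exact: vs_sorted|].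
by move=> x; rewrite mem_vnorm.
Qed.

Lemma mkvset_eq s1 s2 : s1 =i s2 -> mkvset s1 = mkvset s2.
Proof.
move=> e; apply: vs_inj => /=.
apply: (irr_sorted_eq (leT := ltn)); [exact: ltn_trans|exact: ltnn|exact: vnorm_sorted|exact: vnorm_sorted|].
by move=> x; rewrite !mem_vnorm e.
Qed.

Lemma mkvsetK (X : vset) : mkvset X = X.
Proof. by apply: vs_inj; rewrite /= vnorm_id. Qed.

Lemma liftX u A : provable CS (Just u vempty A) -> forall X : vset, provable CS (Just u X A).
Proof.
move=> h X; rewrite -(mkvsetK X); elim: (vs X) => [|a l IH] //.
case: (boolP (a \in l)) => al.
  rewrite (@mkvset_eq (a :: l) l) // => x; rewrite in_cons.
  by case: eqP => // ->; rewrite al.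
have -> : mkvset (a :: l) = vadd (mkvset l) a.
  by apply: mkvset_eq => x; rewrite /= !in_cons mem_vnorm.
apply: PMP IH; apply: PAx; apply: AxA3; by rewrite /= mem_vnorm.
Qed.

Lemma lift (happ : axiomatically_appropriate CS) A :
  provable CS A -> exists u, provable CS (Just u vempty A).
Proof.
elim=> {A}.
- move=> A /happ [c hc]; exists (JConst c); exact: PCS.
- move=> c A hc; exists (JBang (JConst c)); exact: PMP (PAx CS (AxB4 _ _ _)) (PCS hc).
- move=> A B _ [u1 h1] _ [u2 h2]; exists (JApp u1 u2).
  exact: PMP (PMP (PAx CS (AxB2 _ _ _ _ _)) h1) h2.
- move=> x A _ [u h]; exists (JGen x u); apply: PMP h; apply: PAx; exact: AxB5.
Qed.

Lemma subst_id x A : subst x x A = A.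
Proof.
elim: A => //=.
- move=> P xs; congr Atom; elim: xs => //= a l ->; by case: eqP => // ->.
- by move=> A -> B ->.
- by move=> w A ->; case: eqP.
- move=> t X A ->; case: ifP => // xX; congr Just.
  rewrite -{2}(mkvsetK X); apply: mkvset_eq => z.
  rewrite in_cons mem_vnorm mem_filter /=.
  by case: (eqVneq z x) => [->|].
Qed.

Lemma free_for_id x A : free_for x x A.
Proof.
elim: A => //=.
- by move=> A -> B ->.
- move=> w A IH; rewrite IH andbT; by case: (w != x); rewrite ?orbT.
- by move=> t X A IH; rewrite IH orbT.
Qed.

End S.

Theorem mainTheorem5 (CS : constspec) (hCS : is_constspec CS)
  (happ : axiomatically_appropriate CS) (y : nat) :
  forall (X : vset), y \notin vs X ->
  forall (phi : formula) (t : jterm),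
  exists f s : jterm,
    provable CS (Imp (Just t X (All y phi)) (All y (Just f (vadd X y) phi))) /\
    provable CS (Imp (Ex y (Just t (vadd X y) phi)) (Just s X (Ex y phi))).
Proof.
move=> X yX phi t.
have inst A : provable CS (Imp (All y A) A).
  by have := PAx CS (AxInst (free_for_id y A)); rewrite subst_id.
have [c hc] := happ _ (AxInst (free_for_id y phi)).
rewrite subst_id in hc.
have hcX := liftX (PCS hc) X.
have H1 := PMP (PAx _ (AxB2 _ t _ _ _)) hcX.
have H2 := syl H1 (PAx _ (AxA3 (JApp (JConst c) t) phi yX)).
have [u hu] := lift happ (perm (inst (Neg phi)) : provable CS (Imp phi (Ex y phi))).
have huX := liftX hu (vadd X y).
have K1 := PMP (PAx _ (AxB2 _ t _ _ _)) huX.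
have nf : ~~ free y (Ex y phi) by rewrite /= eqxx.
have K2 := syl K1 (PAx _ (AxA2 (JApp u t) yX nf)).
exists (JApp (JConst c) t), (JApp u t); split.
- have nT : ~~ free y (Just t X (All y phi)) by [].
  apply: syl (PAx _ (AxVac nT)) _.
  exact: PMP (PAx _ (AxAllImp _ _ _)) (PGen y H2).
- set A := Just t (vadd X y) phi in K2 *; set B := Just _ X _ in K2 *.
  have c1 := contra Bot K2.
  have c2 := PMP (PAx _ (AxAllImp y _ _)) (PGen y c1).
  have nB : ~~ free y (Neg B) by rewrite /= orbF.
  have c3 := syl (PAx _ (AxVac nB)) c2.
  exact: syl (contra Bot c3) (PAx _ (AxDN _)).
Qed.
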